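(* Let $R,S,T$ be multirelations $X\leftrightarrow\mathcal{P}Y$. Then (1) if $R\subseteq S$ then $R\cap T\sqsubseteq_\downarrow S\cap T$ and $S\cap T\sqsubseteq_\uparrow R\cap T$; (2) $R\Cap S\sqsubseteq_\downarrow R\sqsubseteq_\downarrow R\Cup R$, $R\Cap R\sqsubseteq_\uparrow R\sqsubseteq_\uparrow R\Cup S$ and $R\Cap R\sqsubseteq_\updownarrow R\sqsubseteq_\updownarrow R\Cup R$; (3) $R\Cap S\sqsubseteq_\downarrow R\Cup S$, $R\Cap S\sqsubseteq_\uparrow R\Cup S$ and $R\Cap S\sqsubseteq_\updownarrow R\Cup S$; (4) with respect to the preorder $\sqsubseteq_\downarrow$, $R\Cap S$ is a greatest lower bound and $R\cup S$ a least upper bound of $R$ and $S$ (unique up to $=_\downarrow$); (5) with respect to the preorder $\sqsubseteq_\uparrow$, $R\Cup S$ is a least upper bound and $R\cup S$ a greatest lower bound of $R$ and $S$ (unique up to $=_\uparrow$).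
   Context: $R\Cup S=\{(a,A\cup B)\mid (a,A)\in R,(a,B)\in S\}$, $R\Cap S=\{(a,A\cap B)\mid (a,A)\in R,(a,B)\in S\}$. $R^{\uparrow}=\{(a,A)\mid\exists B.(a,B)\in R\wedge B\subseteq A\}$, $R^{\downarrow}=\{(a,A)\mid\exists B.(a,B)\in R\wedge A\subseteq B\}$. $R\sqsubseteq_\uparrow S\iff S\subseteq R^{\uparrow}$; $R\sqsubseteq_\downarrow S\iff R\subseteq S^{\downarrow}$; $R\sqsubseteq_\updownarrow S\iff R\sqsubseteq_\downarrow S\wedge R\sqsubseteq_\uparrow S$. $R=_\downarrow S\iff R^{\downarrow}=S^{\downarrow}$, $R=_\uparrow S\iff R^{\uparrow}=S^{\uparrow}$. A greatest lower bound of $R,S$ w.r.t. a preorder $\sqsubseteq$ is an element $L$ with $L\sqsubseteq R$, $L\sqsubseteq S$ and $T\sqsubseteq L$ for every $T$ with $T\sqsubseteq R$ and $T\sqsubseteq S$; least upper bound dually. *)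

(* Defs.v *)
From mathcomp Require Import all_boot.
From mathcomp Require Import boolp classical_sets.
Set Implicit Arguments. Unset Strict Implicit. Unset Printing Implicit Defensive.
Local Open Scope classical_set_scope.

Definition mrel (X Y : Type) := set (X * set Y).

Section MRel.
Context {X Y : Type}.

Definition mcup (R S : mrel X Y) : mrel X Y :=
  [set p | exists A B, R (p.1, A) /\ S (p.1, B) /\ p.2 = A `|` B].
Definition mcap (R S : mrel X Y) : mrel X Y :=
  [set p | exists A B, R (p.1, A) /\ S (p.1, B) /\ p.2 = A `&` B].
Definition upc (R : mrel X Y) : mrel X Y :=
  [set p | exists B, R (p.1, B) /\ B `<=` p.2].
Definition downc (R : mrel X Y) : mrel X Y :=
  [set p | exists B, R (p.1, B) /\ p.2 `<=` B].

Definition le_up (R S : mrel X Y) : Prop := S `<=` upc R.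
Definition le_down (R S : mrel X Y) : Prop := R `<=` downc S.
Definition le_updown (R S : mrel X Y) : Prop := le_down R S /\ le_up R S.
Definition eq_down (R S : mrel X Y) : Prop := downc R = downc S.
Definition eq_up (R S : mrel X Y) : Prop := upc R = upc S.
End MRel.

Definition is_glb {T : Type} (le : T -> T -> Prop) (R S L : T) : Prop :=
  le L R /\ le L S /\ forall U, le U R -> le U S -> le U L.
Definition is_lub {T : Type} (le : T -> T -> Prop) (R S L : T) : Prop :=
  le R L /\ le S L /\ forall U, le R U -> le S U -> le L U.

(* Main.v *)
Require Import Defs.
From mathcomp Require Import all_boot.
From mathcomp Require Import boolp classical_sets.
Local Open Scope classical_set_scope.


Section H.
Context {X Y : Type}.
Implicit Types R S L U : mrel X Y.

Lemma down_tr L M : L `<=` downc M -> downc L `<=` downc M.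
Proof.
move=> h [a C] [B [LB CB]]; have [D [MD BD]] := h _ LB.
by exists D; split=> //; apply: subset_trans BD.
Qed.

Lemma up_tr L M : L `<=` upc M -> upc L `<=` upc M.
Proof.
move=> h [a C] [B [LB CB]]; have [D [MD BD]] := h _ LB.
by exists D; split=> //; apply: subset_trans CB.
Qed.

Lemma eqd L M : le_down L M -> le_down M L -> eq_down L M.
Proof. by move=> h1 h2; apply/seteqP; split; apply: down_tr. Qed.

Lemma equ L M : le_up L M -> le_up M L -> eq_up L M.
Proof. by move=> h1 h2; apply/seteqP; split; apply: up_tr. Qed.

Lemma d_capl R S : le_down (mcap R S) R.
Proof. by move=> [a C] [A [B [RA [SB /= ->]]]]; exists A; split=> // y []. Qed.
Lemma d_capr R S : le_down (mcap R S) S.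
Proof. by move=> [a C] [A [B [RA [SB /= ->]]]]; exists B; split=> // y []. Qed.
Lemma d_cupl R : le_down R (mcup R R).
Proof. by move=> [a C] RC; exists (C `|` C); split; [exists C, C|move=> y Cy; left]. Qed.
Lemma u_cupl R S : le_up R (mcup R S).
Proof. by move=> [a C] [A [B [RA [SB /= ->]]]]; exists A; split=> // y Ay; left. Qed.
Lemma u_cupr R S : le_up S (mcup R S).
Proof. by move=> [a C] [A [B [RA [SB /= ->]]]]; exists B; split=> // y Ay; right. Qed.
Lemma u_capl R : le_up (mcap R R) R.
Proof. by move=> [a C] RC; exists (C `&` C); split; [exists C, C|move=> y []]. Qed.
Lemma d_capcup R S : le_down (mcap R S) (mcup R S).
Proof.
move=> [a C] [A [B [RA [SB /= ->]]]]; exists (A `|` B); split; first by exists A, B.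
by move=> y [] Ay _; left.
Qed.
Lemma u_capcup R S : le_up (mcap R S) (mcup R S).
Proof.
move=> [a C] [A [B [RA [SB /= ->]]]]; exists (A `&` B); split; first by exists A, B.
by move=> y [] Ay _; left.
Qed.
Lemma d_glb R S U : le_down U R -> le_down U S -> le_down U (mcap R S).
Proof.
move=> h1 h2 [a C] UC; have [A [RA CA]] := h1 _ UC; have [B [SB CB]] := h2 _ UC.
exists (A `&` B); split; first by exists A, B.
by move=> y Cy; split; [apply: CA|apply: CB].
Qed.
Lemma u_lub R S U : le_up R U -> le_up S U -> le_up (mcup R S) U.
Proof.
move=> h1 h2 [a C] UC; have [A [RA CA]] := h1 _ UC; have [B [SB CB]] := h2 _ UC.
exists (A `|` B); split; first by exists A, B.
by move=> y [] ?; [apply: CA|apply: CB].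
Qed.
Lemma d_unl R S : le_down R (R `|` S).
Proof. by move=> [a C] RC; exists C; split=> //; left. Qed.
Lemma d_unr R S : le_down S (R `|` S).
Proof. by move=> [a C] RC; exists C; split=> //; right. Qed.
Lemma u_unl R S : le_up (R `|` S) R.
Proof. by move=> [a C] RC; exists C; split=> //; left. Qed.
Lemma u_unr R S : le_up (R `|` S) S.
Proof. by move=> [a C] RC; exists C; split=> //; right. Qed.
Lemma d_lub R S U : le_down R U -> le_down S U -> le_down (R `|` S) U.
Proof. by move=> h1 h2 p [] ?; [apply: h1|apply: h2]. Qed.
Lemma u_glb R S U : le_up U R -> le_up U S -> le_up U (R `|` S).
Proof. by move=> h1 h2 p [] ?; [apply: h1|apply: h2]. Qed.
End H.

Theorem lemma5p7 (X Y : Type) (R S T : mrel X Y) :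
  (* (1) *)
  (R `<=` S -> le_down (R `&` T) (S `&` T) /\ le_up (S `&` T) (R `&` T)) /\
  (* (2) *)
  (le_down (mcap R S) R /\ le_down R (mcup R R)) /\
  (le_up (mcap R R) R /\ le_up R (mcup R S)) /\
  (le_updown (mcap R R) R /\ le_updown R (mcup R R)) /\
  (* (3) *)
  (le_down (mcap R S) (mcup R S) /\ le_up (mcap R S) (mcup R S) /\
   le_updown (mcap R S) (mcup R S)) /\
  (* (4) *)
  (is_glb le_down R S (mcap R S) /\
   (forall L, is_glb le_down R S L -> eq_down L (mcap R S)) /\
   is_lub le_down R S (R `|` S) /\
   (forall L, is_lub le_down R S L -> eq_down L (R `|` S))) /\
  (* (5) *)
  (is_lub le_up R S (mcup R S) /\
   (forall L, is_lub le_up R S L -> eq_up L (mcup R S)) /\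
   is_glb le_up R S (R `|` S) /\
   (forall L, is_glb le_up R S L -> eq_up L (R `|` S))).
Proof.
split.
  move=> RS; split; move=> [a C] [RC TC]; exists C; (split; last by []); split=> //; exact: RS.
split; first by split; [apply: d_capl|apply: d_cupl].
split; first by split; [apply: u_capl|apply: u_cupl].
split; first by split; split; [apply: d_capl|apply: u_capl|apply: d_cupl|apply: u_cupl].
split; first by split; [apply: d_capcup|split; [apply: u_capcup|split; [apply: d_capcup|apply: u_capcup]]].
have G1 : is_glb le_down R S (mcap R S).
  by split; [apply: d_capl|split; [apply: d_capr|move=> U; apply: d_glb]].
have L1 : is_lub le_down R S (R `|` S).
  by split; [apply: d_unl|split; [apply: d_unr|move=> U; apply: d_lub]].
have L2 : is_lub le_up R S (mcup R S).
  by split; [apply: u_cupl|split; [apply: u_cupr|move=> U; apply: u_lub]].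
have G2 : is_glb le_up R S (R `|` S).
  by split; [apply: u_unl|split; [apply: u_unr|move=> U; apply: u_glb]].
split.
  split=> //; split.
    move=> L [h1 [h2 h3]]; apply: eqd; first by apply: d_glb.
    by case: G1 => [a [b c]]; exact: (h3 _ a b).
  split=> //; move=> L [h1 [h2 h3]]; apply: eqd; last by apply: d_lub.
  by case: L1 => [a [b c]]; exact: (h3 _ a b).
split=> //; split.
  move=> L [h1 [h2 h3]]; apply: equ; last by apply: u_lub.
  by case: L2 => [a [b c]]; exact: (h3 _ a b).
split=> //; move=> L [h1 [h2 h3]]; apply: equ; first by apply: u_glb.
by case: G2 => [a [b c]]; exact: (h3 _ a b).
Qed.
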